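(* Let $N\ge 2$, $P=2$, $L=N+1$. For $\mathbf{b}=[b_1,\dots,b_N]^T\in\{\pm1\}^N$ let $\mathbf{B}$ be the $L\times 2$ matrix whose first column is $[b_1,\dots,b_N,0]^T$ and whose second column is $[0,b_1,\dots,b_N]^T$, so that $$\mathbf{B}^T\mathbf{B}=\begin{bmatrix}N & \sum_{i=1}^{N-1}b_ib_{i+1}\\ \sum_{i=1}^{N-1}b_ib_{i+1} & N\end{bmatrix}.$$ For a $2\times2$ matrix $\mathbf{G}$ and a prefix $\mathbf{b}_{(\ell)}=[b_1,\dots,b_\ell]\in\{\pm1\}^\ell$ ($1\le\ell\le N$), let $\mathcal{A}(\mathbf{b}_{(\ell)}\mid\mathbf{G})$ denote the set of all $\mathbf{b}'\in\{\pm1\}^N$ whose first $\ell$ entries equal $b_1,\dots,b_\ell$ and whose associated matrix $\mathbf{B}'$ satisfies $\mathbf{B}'^T\mathbf{B}'=\mathbf{G}$. Let $m_\ell=(b_1b_2+\cdots+b_{\ell-1}b_\ell)\cdot\mathbf{1}\{\ell>1\}$ (so $m_1=0$), where $\mathbf{1}\{\cdot\}$ is the indicator function. (i) If $N$ is odd and $\mathbf{G}=N\mathbf{I}_2$, then for $1\le\ell\le N$, $$|\mathcal{A}(\mathbf{b}_{(\ell)}\mid\mathbf{G})|=\binom{N-\ell}{(N-\ell-m_\ell)/2}\,\mathbf{1}\{|m_\ell|\le N-\ell\}.$$ (ii) If $N$ is even, and $\mathbf{G}_1=\begin{bmatrix}N&-1\\-1&N\end{bmatrix}$, $\mathbf{G}_2=\begin{bmatrix}N&1\\1&N\end{bmatrix}$,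 then for $\theta\in\{1,2\}$ and $1\le\ell\le N$, $$|\mathcal{A}(\mathbf{b}_{(\ell)}\mid\mathbf{G}_\theta)|=\binom{N-\ell}{(N-\ell+(-1)^\theta-m_\ell)/2}\,\mathbf{1}\{|(-1)^\theta-m_\ell|\le N-\ell\}.$$ Here $\binom{0}{0}=1$, and the right-hand sides are understood to be $0$ whenever the indicator is $0$.
   Context: $\mathbf{I}_2$ is the $2\times 2$ identity matrix. This is the setting of binary $\pm1$ codewords transmitted over a channel of memory order one, where $\mathbf{B}$ is the convolution (Toeplitz) matrix of the codeword. *)

(* Defs.v *)
From HB Require Import structures.
From mathcomp Require Import all_boot all_order all_algebra.
Set Implicit Arguments. Unset Strict Implicit. Unset Printing Implicit Defensive.
Import Order.TTheory GRing.Theory Num.Theory.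
Local Open Scope ring_scope.

(* A codeword b in {+1,-1}^N is encoded as b : {ffun 'I_N -> bool},
   with true |-> +1 and false |-> -1 (a bijection). *)
Definition sgnb (x : bool) : int := if x then 1 else -1.

(* bv b k = b_{k+1} (0-based index k), and 0 outside 0 <= k < N. *)
Definition bv (N : nat) (b : {ffun 'I_N -> bool}) (k : nat) : int :=
  match ltnP k N with
  | LtnNotGeq Hk => sgnb (b (Ordinal Hk))
  | _ => 0
  end.

Definition Bmat (N : nat) (b : {ffun 'I_N -> bool}) : 'M[int]_(N.+1, 2) :=
  \matrix_(i < N.+1, j < 2)
    (if j == 0 :> nat then bv b i else if i == 0 :> nat then 0 else bv b i.-1).

Definition Aset (N : nat) (b : {ffun 'I_N -> bool}) (l : nat) (G : 'M[int]_2)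
  : {set {ffun 'I_N -> bool}} :=
  [set b' : {ffun 'I_N -> bool} |
     [forall i : 'I_N, (i < l)%N ==> (b' i == b i)] &&
     ((Bmat b')^T *m Bmat b' == G)].

Definition mell (N : nat) (b : {ffun 'I_N -> bool}) (l : nat) : int :=
  \sum_(0 <= k < l.-1) bv b k * bv b k.+1.

Definition Gtheta (N theta : nat) : 'M[int]_2 :=
  \matrix_(i < 2, j < 2) (if i == j then (N%:Z) else (-1) ^+ theta).

Definition GNI (N : nat) : 'M[int]_2 := (N%:Z)%:M.

(* Main.v *)
Require Import Defs.
From HB Require Import structures.
From mathcomp Require Import all_boot all_order all_algebra.
From mathcomp Require Import zify ring lra.
Import Order.TTheory GRing.Theory Num.Theory.
Local Open Scope ring_scope.
Set Implicit Arguments. Unset Strict Implicit.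

Section S.
Variable N : nat.
Implicit Types b : {ffun 'I_N -> bool}.

Lemma bv_ord b (i : 'I_N) : bv b i = sgnb (b i).
Proof.
rewrite /bv; case: (ltnP i N) => [Hk|]; last by rewrite leqNgt ltn_ord.
by congr (sgnb (b _)); apply: val_inj.
Qed.

Lemma bv_ge b k : (N <= k)%N -> bv b k = 0.
Proof. by rewrite /bv; case: (ltnP k N) => //; rewrite leqNgt => /negP. Qed.

Definition bn b k := bv b k == 1.

Lemma sgnb1 x : (sgnb x == 1) = x.
Proof. by case: x. Qed.

Lemma bn_ord b (i : 'I_N) : bn b i = b i.
Proof. by rewrite /bn bv_ord sgnb1. Qed.

Lemma bv_bn b k : (k < N)%N -> bv b k = sgnb (bn b k).
Proof. by move=> Hk; rewrite -[k]/(nat_of_ord (Ordinal Hk)) bn_ord bv_ord. Qed.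

Lemma bn_ffun (g : nat -> bool) k : (k < N)%N -> bn [ffun i : 'I_N => g i] k = g k.
Proof. by move=> Hk; rewrite -[k]/(nat_of_ord (Ordinal Hk)) bn_ord ffunE. Qed.

Definition w b i := bv b i.-1 * bv b i.

Lemma sgnbM x y : sgnb x * sgnb y = sgnb (x == y).
Proof. by case: x; case: y. Qed.

Lemma w_sgn b i : (0 < i < N)%N -> w b i = sgnb (bn b i.-1 == bn b i).
Proof.
case/andP=> Hi HN; rewrite /w !bv_bn ?sgnbM //.
by apply: leq_ltn_trans HN; apply: leq_pred.
Qed.

Lemma mellE b K : mell b K = \sum_(1 <= i < K) w b i.
Proof.
rewrite /mell big_add1 /w; apply: eq_bigr => i _ //.
Qed.

Lemma sum_pm (f : nat -> int) a c :
  (forall i, (a <= i < c)%N -> f i = 1 \/ f i = -1) ->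
  \sum_(a <= i < c) f i = 2 * (\sum_(a <= i < c) (f i == 1 : nat))%:R - (c - a)%:R.
Proof.
move=> H.
rewrite (eq_big_nat _ _ (F2 := fun i => 2 * (f i == 1 : nat)%:R - 1)); last first.
  by move=> i /H [] ->.
by rewrite sumrB -mulr_sumr natr_sum sumr_const_nat.
Qed.


Lemma sumsq b : \sum_(k < N) bv b k * bv b k = N%:R.
Proof.
rewrite (eq_bigr (fun _ => 1)); last by move=> i _; rewrite bv_ord sgnbM eqxx.
by rewrite sumr_const card_ord.
Qed.

Lemma offsum b : (1 < N)%N ->
  \sum_(k < N) bv b k.+1 * bv b k = mell b N.
Proof.
move=> HN1; have HN : (0 < N)%N by apply: ltnW.
rewrite mellE -(big_mkord xpredT (fun k => bv b k.+1 * bv b k)).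
rewrite -[X in \sum_(0 <= i < X) _](prednK HN) big_nat_recr //= (prednK HN) bv_ge // mul0r addr0.
rewrite big_add1 /w; apply: eq_bigr => i _; by rewrite mulrC.
Qed.

Lemma gram b : (1 < N)%N ->
  (Bmat b)^T *m Bmat b = \matrix_(i < 2, j < 2) (if i == j then N%:Z else mell b N).
Proof.
move=> HN1; have HN : (0 < N)%N by apply: ltnW.
apply/matrixP => i j; rewrite !mxE.
under eq_bigr do rewrite !mxE.
case: i => [[|[|m]]] Hi //; case: j => [[|[|n]]] Hj //=; rewrite ?mxE.
- by rewrite big_ord_recr /= (@bv_ge b N (leqnn N)) mulr0 addr0 sumsq natz.
- by rewrite big_ord_recl /= mulr0 add0r offsum.
- by rewrite big_ord_recl /= mul0r add0r -offsum //; apply: eq_bigr => k _; rewrite mulrC.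
- by rewrite big_ord_recl /= mul0r add0r sumsq natz.
Qed.

End S.

Section Core.
Variables (N : nat) (b : {ffun 'I_N -> bool}) (l : nat).
Hypotheses (Hl1 : (0 < l)%N) (HlN : (l <= N)%N).

Definition pref (b' : {ffun 'I_N -> bool}) := [forall i : 'I_N, (i < l)%N ==> (b' i == b i)].
Definition Bs := [set i : 'I_N | (l <= i)%N].
Definition Fs (b' : {ffun 'I_N -> bool}) := [set i : 'I_N | (l <= i)%N && (w b' i == 1)].

Lemma pref_bv b' k : pref b' -> (k < l)%N -> bv b' k = bv b k.
Proof.
move=> /forallP H Hk.
have HkN : (k < N)%N by apply: leq_trans Hk HlN.
have := H (Ordinal HkN); rewrite /= Hk /= => /eqP E.
by rewrite -[k]/(nat_of_ord (Ordinal HkN)) !bv_ord E.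
Qed.

Lemma pref_mell b' : pref b' -> mell b' l = mell b l.
Proof.
move=> P; rewrite /mell; apply: eq_big_nat => k /andP [_ Hk].
have Hk1 : (k.+1 < l)%N by rewrite -(prednK Hl1) ltnS.
by rewrite !(pref_bv P) //; apply: ltnW.
Qed.

Lemma cardF b' : #|Fs b'| = (\sum_(l <= i < N) (w b' i == 1 : nat))%N.
Proof.
rewrite -sum1_card big_geq_mkord big_mkcond [RHS]big_mkcond /=.
by apply: eq_bigr => i _; rewrite inE; case: (l <= i)%N; case: (w b' i == 1).
Qed.

Lemma cardB : #|Bs| = (N - l)%N.
Proof.
rewrite -sum1_card -[RHS]muln1 -sum_nat_const_nat big_geq_mkord big_mkcond [RHS]big_mkcond /=.
by apply: eq_bigr => i _; rewrite inE.
Qed.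

Lemma mell_split b' : pref b' ->
  mell b' N = mell b l + 2 * (#|Fs b'|)%:R - (N - l)%:R.
Proof.
move=> P; rewrite mellE (@big_cat_nat _ _ _ l 1 N _ _ Hl1 HlN) /= -mellE pref_mell // cardF.
rewrite sum_pm ?addrA // => i /andP [Hi HiN].
rewrite w_sgn; last by rewrite HiN andbT; apply: leq_trans Hi.
by case: (_ == _); [left|right].
Qed.

Lemma cond_equiv b' t : pref b' ->
  (mell b' N == t) = (2 * (#|Fs b'|)%:Z == (N - l)%:Z + t - mell b l).
Proof.
move=> P; rewrite mell_split //; apply/eqP/eqP => H; rewrite -!natz in H *; lra.
Qed.


Lemma memF b' (i : 'I_N) : (i \in Fs b') = (l <= i)%N && (bn b' i.-1 == bn b' i).
Proof.
rewrite inE; case Hi: (l <= i)%N => //=.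
by rewrite w_sgn ?sgnb1 // ltn_ord andbT; apply: leq_trans Hi.
Qed.

Lemma F_inj b1 b2 : pref b1 -> pref b2 -> Fs b1 = Fs b2 -> b1 = b2.
Proof.
move=> P1 P2 E.
suff H : forall k, (k < N)%N -> bn b1 k = bn b2 k.
  by apply/ffunP => i; rewrite -!bn_ord H.
elim=> [|k IH] Hk.
  by rewrite /bn !pref_bv.
case: (ltnP k.+1 l) => Hkl; first by rewrite /bn !pref_bv.
have := congr1 (fun S : {set 'I_N} => Ordinal Hk \in S) E; rewrite !memF /= Hkl /=.
rewrite IH; last by apply: ltnW.
by case: (bn b2 k); case: (bn b1 k.+1); case: (bn b2 k.+1).
Qed.

Definition inA (A : {set 'I_N}) k := [exists i in A, val i == k].

Lemma inA_ord (A : {set 'I_N}) (i : 'I_N) : inA A i = (i \in A).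
Proof.
apply/existsP/idP => [[j /andP [jA /eqP e]]|iA]; last by exists i; rewrite iA eqxx.
by have -> : i = j by apply: val_inj.
Qed.

Fixpoint gA (A : {set 'I_N}) (k : nat) : bool :=
  match k with
  | 0 => bn b 0
  | k'.+1 => if (k'.+1 < l)%N then bn b k'.+1
             else if inA A k'.+1 then gA A k' else ~~ gA A k'
  end.

Definition bA A := [ffun i : 'I_N => gA A i].

Lemma bA_pref (A : {set 'I_N}) : pref (bA A).
Proof.
apply/forallP => i; apply/implyP => Hi; rewrite ffunE -bn_ord.
by case: (nat_of_ord i) Hi => [|k] //= ->.
Qed.

Lemma bA_F (A : {set 'I_N}) : A \subset Bs -> Fs (bA A) = A.
Proof.
move=> /subsetP sAB; apply/setP => i; rewrite memF.
case: (ltnP i l) => Hi /=.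
  by apply/esym/negP => /sAB; rewrite inE leqNgt Hi.
have HiN := ltn_ord i.
move: Hi HiN; rewrite -inA_ord.
case: i => [[|k] Hk] /= Hi HiN; first by move: Hi; rewrite leqNgt Hl1.
rewrite !bn_ffun //; last by apply: ltnW.
rewrite /= ltnNge Hi /=.
by case: (inA A k.+1); case: (gA A k).
Qed.


Lemma core t :
  #|[set b' | pref b' && (mell b' N == t)]| =
  #|[set A : {set 'I_N} | (A \subset Bs) && (2 * (#|A|)%:Z == (N - l)%:Z + t - mell b l)]|.
Proof.
rewrite -(@card_in_imset _ _ Fs); last first.
  by move=> x y; rewrite !inE => /andP [Px _] /andP [Py _]; apply: F_inj.
apply: eq_card => A; rewrite [in RHS]inE.
apply/imsetP/idP => [[b' Hb' ->]|/andP [sAB HA]].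
  move: Hb'; rewrite inE => /andP [P Hc]; rewrite -cond_equiv // Hc andbT.
  by apply/subsetP => i; rewrite !inE => /andP [].
exists (bA A); last by rewrite bA_F.
by rewrite inE bA_pref cond_equiv ?bA_pref // bA_F.
Qed.

Lemma fin (c r : int) : c = 2 * r ->
  #|[set A : {set 'I_N} | (A \subset Bs) && (2 * (#|A|)%:Z == c)]| =
  if `|c - (N - l)%:Z| <= (N - l)%:Z then 'C(N - l, (absz c)./2) else 0%N.
Proof.
move=> Ec; case: ifP => H.
- have c0 : 0 <= c by move: H; rewrite ler_norml => /andP [H1 _]; lra.
  have r0 : 0 <= r by lra.
  have Er : r = (absz r)%:Z by rewrite abszE ger0_norm.
  set p := absz r in Er.
  have -> : ((absz c)./2 = p)%N.
    by rewrite Ec Er -natz -natrM natz /= mul2n doubleK.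
  rewrite -cardB -cards_draws; apply: eq_card => A; rewrite !inE.
  congr (_ && _); rewrite Ec Er; clearbody p; clear Ec Er H c0 r0; apply/eqP/eqP => E; last by rewrite E.
  by apply/eqP; rewrite -eqz_nat; apply/eqP; lra.
- apply: eq_card0 => A; rewrite inE; apply/negP => /andP [sAB /eqP E].
  have := subset_leq_card sAB; rewrite cardB => Hc.
  move: H; rewrite ler_norml -E; lia.
Qed.

End Core.

Lemma gram_eq N (b' : {ffun 'I_N -> bool}) (t : int) (G : 'M[int]_2) : (1 < N)%N ->
  G = \matrix_(i < 2, j < 2) (if i == j then N%:Z else t) ->
  ((Bmat b')^T *m Bmat b' == G) = (mell b' N == t).
Proof.
move=> HN ->; rewrite gram //; apply/eqP/eqP => [/matrixP /(_ 0 1)|->]; by rewrite ?mxE.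
Qed.

Lemma GNIE N : GNI N = \matrix_(i < 2, j < 2) (if i == j then N%:Z else 0).
Proof. by apply/matrixP => i j; rewrite /GNI !mxE; case: (i == j). Qed.

Lemma GthE N th : Gtheta N th = \matrix_(i < 2, j < 2) (if i == j then N%:Z else (-1) ^+ th).
Proof. by []. Qed.

Lemma count_gen N (b : {ffun 'I_N -> bool}) l (t : int) G r : (1 < N)%N -> (1 <= l <= N)%N ->
  G = \matrix_(i < 2, j < 2) (if i == j then N%:Z else t) ->
  (N%:Z - 1 + t = 2 * r) ->
  #|Aset b l G| = if `|(N - l)%:Z + t - mell b l - (N - l)%:Z| <= (N - l)%:Z
                  then 'C(N - l, (absz ((N - l)%:Z + t - mell b l)%R)./2) else 0%N.
Proof.
move=> HN /andP [Hl1 HlN] EG Er.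
have -> : #|Aset b l G| = #|[set b' | pref b l b' && (mell b' N == t)]|.
  by apply: eq_card => b'; rewrite !inE (gram_eq _ HN EG).
rewrite core //.
pose q := (\sum_(1 <= i < l) (w b i == 1 : nat))%N.
have Em : mell b l = 2 * q%:R - (l - 1)%:R.
  rewrite mellE sum_pm // => i /andP [Hi Hil].
  rewrite w_sgn; first by case: (_ == _); [left|right].
  by rewrite Hi /=; apply: leq_trans Hil HlN.
apply: (fin _ _ (r := r - q%:R)) => //.
rewrite Em -!natz natrB // natrB //; lra.
Qed.

Unset Implicit Arguments.

Theorem lemma2 (N : nat) (hN : (2 <= N)%N) :
  (odd N ->
   forall (b : {ffun 'I_N -> bool}) (l : nat), (1 <= l <= N)%N ->
     #|Aset b l (GNI N)| =
       if `|mell b l| <= N%:Z - l%:Z then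
          'C(N - l, (absz (N%:Z - l%:Z - mell b l)%R)./2)%N
       else 0%N) /\
  (~~ odd N ->
   forall (theta : nat), (theta == 1)%N || (theta == 2)%N ->
   forall (b : {ffun 'I_N -> bool}) (l : nat), (1 <= l <= N)%N ->
     #|Aset b l (Gtheta N theta)| =
       if `|(-1) ^+ theta - mell b l| <= N%:Z - l%:Z then
          'C(N - l, (absz (N%:Z - l%:Z + (-1) ^+ theta - mell b l)%R)./2)%N
       else 0%N).
Proof.
have EN : N%:Z = (odd N)%:Z + 2 * (N./2)%:Z.
  by rewrite -[in LHS](odd_double_half N) -muln2 PoszD PoszM mulrC.
split.
- move=> oN b l Hl.
  have Hl' := Hl; case/andP: Hl' => _ HlN.
  have Enl : ((N - l)%N)%:Z = N%:Z - l%:Z by rewrite subzn.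
  rewrite (@count_gen N b l 0 (GNI N) (N./2)%:Z hN Hl (GNIE N)); last first.
    by rewrite EN oN /=; ring.
  rewrite Enl addr0.
  have -> : N%:Z - l%:Z - mell b l - (N%:Z - l%:Z) = - mell b l by ring.
  by rewrite normrN.
- move=> eN theta Hth b l Hl.
  have Hl' := Hl; case/andP: Hl' => _ HlN.
  have Enl : ((N - l)%N)%:Z = N%:Z - l%:Z by rewrite subzn.
  have [r Er] : exists r : int, N%:Z - 1 + (-1) ^+ theta = 2 * r.
    case/orP: Hth => /eqP ->.
      by exists ((N./2)%:Z - 1); rewrite EN (negbTE eN) expr1 /=; ring.
    by exists (N./2)%:Z; rewrite EN (negbTE eN) expr2 /=; ring.
  rewrite (@count_gen N b l _ (Gtheta N theta) r hN Hl (GthE N theta) Er).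
  rewrite Enl.
  have -> : N%:Z - l%:Z + (-1) ^+ theta - mell b l - (N%:Z - l%:Z) = (-1) ^+ theta - mell b l by ring.
  by [].
Qed.
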